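(* Let $(\Gamma,\Lambda)$ be a Hecke pair with $\Lambda$ finitely generated. Suppose there is a locally compact group $E$ and a homomorphism $\phi:\Gamma\to E$ such that $\phi|_\Lambda$ is a virtual uniform lattice embedding. Then $E$ is an engulfing group of $(\Gamma,\Lambda)$ and $\Lambda$ is uniformly commensurated in $\Gamma$.
   Context: A Hecke pair $(\Gamma,\Lambda)$ is a group with a commensurated subgroup. Virtual uniform lattice embedding: finite kernel, discrete cocompact image. $E$ is an engulfing group of $(\Gamma,\Lambda)$ if there are a virtual uniform lattice embedding $\rho:\Lambda\to E$ and a homomorphism $\Delta:\Gamma\to\mathrm{Aut}(E)$ extending $h\mapsto$ conjugation by $\rho(h)$ on $\Lambda$, such that for every $g\in\Gamma$, $\Delta(g)(\rho(h))=\rho(ghg^{-1})$ for all $h$ in some finite index subgroup of $\Lambda$. Uniformly commensurated: there are $K,A$ such that each element of the image of the conjugation map $\Gamma\to\mathrm{Comm}(\Lambda)\to\mathrm{QI}(\Lambda)$ is represented by a $(K,A)$-quasi-isometry of $\Lambda$ (word metric). *)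

(* Defs.v *)
From HB Require Import structures.
From mathcomp Require Import all_boot all_algebra.
From mathcomp Require Import all_classical all_reals all_analysis.
From Stdlib Require Import Rdefinitions Raxioms RIneq List.


Local Open Scope classical_set_scope.

Record AbsGroup := {
  gcar :> Type;
  gmul : gcar -> gcar -> gcar;
  ginv : gcar -> gcar;
  gone : gcar;
  gmulA : forall x y z, gmul x (gmul y z) = gmul (gmul x y) z;
  gmul1 : forall x, gmul gone x = x;
  gmulV : forall x, gmul (ginv x) x = gone
}.

Record TopGroup := {
  tgsp : topologicalType;
  tmul : tgsp -> tgsp -> tgsp;
  tinv : tgsp -> tgsp;
  tone : tgsp;
  tmulA : forall x y z, tmul x (tmul y z) = tmul (tmul x y) z;
  tmul1 : forall x, tmul tone x = x;
  tmulV : forall x, tmul (tinv x) x = tone;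
  tmul_cont : continuous (fun p : tgsp * tgsp => tmul p.1 p.2);
  tinv_cont : continuous tinv
}.

Set Implicit Arguments.
Unset Strict Implicit.
Unset Printing Implicit Defensive.

Arguments gmul {a}. Arguments ginv {a}. Arguments tmul {t}. Arguments tinv {t}.

(* Locally compact group (Hausdorff, as is the standard convention). *)
Definition locally_compact_group (E : TopGroup) : Prop :=
  hausdorff_space (tgsp E) /\ locally_compact [set: tgsp E].

Definition subgroup (G : AbsGroup) (H : G -> Prop) : Prop :=
  H (gone G) /\
  (forall x y, H x -> H y -> H (gmul x y)) /\
  (forall x, H x -> H (ginv x)).

Definition finite_index (G : AbsGroup) (H K : G -> Prop) : Prop :=
  subgroup H /\ (forall x, H x -> K x) /\
  exists s : list G, forall k, K k ->
    exists x, In x s /\ K x /\ H (gmul (ginv x) k).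

(* conjugate g L g^{-1} *)
Definition conj_set (G : AbsGroup) (g : G) (L : G -> Prop) : G -> Prop :=
  fun y => L (gmul (ginv g) (gmul y g)).

Definition conjg (G : AbsGroup) (g h : G) : G := gmul g (gmul h (ginv g)).

Definition hecke_pair (G : AbsGroup) (L : G -> Prop) : Prop :=
  subgroup L /\
  forall g : G,
    finite_index (fun y => L y /\ conj_set g L y) L /\
    finite_index (fun y => L y /\ conj_set g L y) (conj_set g L).

Fixpoint eval_word (G : AbsGroup) (w : list (bool * G)) : G :=
  match w with
  | nil => gone G
  | (b, s) :: w' => gmul (if b then ginv s else s) (eval_word w')
  end.

Definition word_over (G : AbsGroup) (S : list G) (w : list (bool * G)) : Prop :=
  forall p, In p w -> In (snd p) S.

Definition finite_generating_set (G : AbsGroup) (L : G -> Prop) (S : list G) : Prop :=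
  (forall s, In s S -> L s) /\
  forall x, L x <-> exists w, word_over S w /\ eval_word w = x.

Definition finitely_generated (G : AbsGroup) (L : G -> Prop) : Prop :=
  exists S, finite_generating_set L S.

Definition word_dist (G : AbsGroup) (S : list G) (x y : G) (n : nat) : Prop :=
  (exists w, word_over S w /\ length w = n /\ eval_word w = gmul (ginv x) y) /\
  (forall w, word_over S w -> eval_word w = gmul (ginv x) y -> (n <= length w)%coq_nat).

(* f : L -> L (given as a map on G preserving L) is a (K,A)-quasi-isometry
   of L with the word metric d_S. *)
Definition quasi_isometry (G : AbsGroup) (L : G -> Prop) (S : list G)
    (K A : R) (f : G -> G) : Prop :=
  Rle 1 K /\ (forall x, L x -> L (f x)) /\
  (forall x y n m, L x -> L y -> word_dist S x y n -> word_dist S (f x) (f y) m ->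
     Rle (Rminus (Rdiv (INR n) K) A) (INR m) /\
     Rle (INR m) (Rplus (Rmult K (INR n)) A)) /\
  (forall y, L y -> exists x n, L x /\ word_dist S (f x) y n /\ Rle (INR n) A).

(* Uniformly commensurated: for a word metric d_S on L there are K, A such that
   the image of each g in QI(L) (the class of the partial isomorphism
   h |-> g h g^{-1} defined on the finite-index subgroup L /\ g^{-1} L g)
   is represented by a (K,A)-quasi-isometry, i.e. a (K,A)-QI at bounded
   distance from h |-> g h g^{-1} on its domain. *)
Definition uniformly_commensurated (G : AbsGroup) (L : G -> Prop) : Prop :=
  forall S, finite_generating_set L S ->
  exists K A : R, forall g : G,
    exists f : G -> G, quasi_isometry L S K A f /\
      exists D : nat, forall h, L h -> conj_set (ginv g) L h ->
        exists n, word_dist S (f h) (conjg g h) n /\ (n <= D)%coq_nat.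

Definition hom_on (G : AbsGroup) (E : TopGroup) (L : G -> Prop) (rho : G -> tgsp E) : Prop :=
  forall x y, L x -> L y -> rho (gmul x y) = tmul (rho x) (rho y).

Definition virtual_uniform_lattice_embedding (G : AbsGroup) (L : G -> Prop)
    (E : TopGroup) (rho : G -> tgsp E) : Prop :=
  hom_on L rho /\
  (exists s : list G, forall h, L h -> rho h = tone E -> In h s) /\
  (forall h, L h -> exists U : set (tgsp E), open U /\ U (rho h) /\
     forall h', L h' -> U (rho h') -> rho h' = rho h) /\
  (exists C : set (tgsp E), compact C /\
     forall e : tgsp E, exists c h, C c /\ L h /\ e = tmul c (rho h)).

Definition top_group_aut (E : TopGroup) (a : tgsp E -> tgsp E) : Prop :=
  (forall x y, a (tmul x y) = tmul (a x) (a y)) /\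
  continuous a /\
  exists b : tgsp E -> tgsp E, continuous b /\ cancel a b /\ cancel b a.

Definition conj_E (E : TopGroup) (e x : tgsp E) : tgsp E := tmul e (tmul x (tinv e)).

Definition engulfing_group (G : AbsGroup) (L : G -> Prop) (E : TopGroup) : Prop :=
  exists (rho : G -> tgsp E) (Delta : G -> tgsp E -> tgsp E),
    virtual_uniform_lattice_embedding L rho /\
    (forall g, top_group_aut (Delta g)) /\
    (forall g1 g2 x, Delta (gmul g1 g2) x = Delta g1 (Delta g2 x)) /\
    (forall h, L h -> forall x, Delta h x = conj_E (rho h) x) /\
    (forall g : G, exists L' : G -> Prop, finite_index L' L /\
       forall h, L' h -> Delta g (rho h) = rho (conjg g h)).

(* Main.v *)
From HB Require Import structures.
Require Import Defs.
From mathcomp Require Import all_boot all_classical all_reals all_analysis.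
From Stdlib Require Import Rdefinitions Raxioms RIneq List Lia Lra Classical.
From mathcomp Require Import zify.
From Stdlib Require Import Wf_nat.
Local Open Scope classical_set_scope.

Lemma gmulVr {G : AbsGroup} (x : G) : gmul x (ginv x) = gone G.
Proof.
rewrite -[gmul x (ginv x)](gmul1 G) -(gmulV G (ginv x)).
by rewrite -gmulA (gmulA G (ginv x)) gmulV gmul1 gmulV.
Qed.
Lemma gmul1r {G : AbsGroup} (x : G) : gmul x (gone G) = x.
Proof. by rewrite -(gmulV G x) gmulA gmulVr gmul1. Qed.
Lemma ginvK {G : AbsGroup} (x : G) : ginv (ginv x) = x.
Proof. by rewrite -[ginv (ginv x)]gmul1r -(gmulV G x) gmulA gmulV gmul1. Qed.
Lemma gmulKl {G : AbsGroup} (x y : G) : gmul (ginv x) (gmul x y) = y.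
Proof. by rewrite gmulA gmulV gmul1. Qed.
Lemma gmulKr {G : AbsGroup} (x y : G) : gmul x (gmul (ginv x) y) = y.
Proof. by rewrite gmulA gmulVr gmul1. Qed.
Lemma ginv_uniq {G : AbsGroup} (x y : G) : gmul x y = gone G -> ginv x = y.
Proof. by move=> h; rewrite -[y](gmulKl x) h gmul1r. Qed.
Lemma ginvM {G : AbsGroup} (x y : G) : ginv (gmul x y) = gmul (ginv y) (ginv x).
Proof. by apply: ginv_uniq; rewrite -gmulA gmulKr gmulVr. Qed.
Lemma ginv1 {G : AbsGroup} : ginv (gone G) = gone G.
Proof. by apply: ginv_uniq; rewrite gmul1. Qed.

Definition TG (E : TopGroup) : AbsGroup :=
  @Build_AbsGroup (tgsp E) tmul tinv (tone E) (tmulA E) (tmul1 E) (tmulV E).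

Lemma tmulVr {E : TopGroup} (x : tgsp E) : tmul x (tinv x) = tone E.
Proof. exact: (@gmulVr (TG E) x). Qed.
Lemma tmul1r {E : TopGroup} (x : tgsp E) : tmul x (tone E) = x.
Proof. exact: (@gmul1r (TG E) x). Qed.
Lemma tinvK {E : TopGroup} (x : tgsp E) : tinv (tinv x) = x.
Proof. exact: (@ginvK (TG E) x). Qed.
Lemma tmulKl {E : TopGroup} (x y : tgsp E) : tmul (tinv x) (tmul x y) = y.
Proof. exact: (@gmulKl (TG E) x y). Qed.
Lemma tmulKr {E : TopGroup} (x y : tgsp E) : tmul x (tmul (tinv x) y) = y.
Proof. exact: (@gmulKr (TG E) x y). Qed.
Lemma tinvM {E : TopGroup} (x y : tgsp E) : tinv (tmul x y) = tmul (tinv y) (tinv x).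
Proof. exact: (@ginvM (TG E) x y). Qed.
Lemma tinv1 {E : TopGroup} : tinv (tone E) = tone E.
Proof. exact: (@ginv1 (TG E)). Qed.

Ltac tnorm := repeat progress rewrite ?tinvM ?tinvK ?tinv1 ?tmulKl ?tmulKr
  ?tmulVr ?tmulV ?tmul1 ?tmul1r -?tmulA.
Ltac gnorm := repeat progress rewrite ?ginvM ?ginvK ?ginv1 ?gmulKl ?gmulKr
  ?gmulVr ?gmulV ?gmul1 ?gmul1r -?gmulA.

Lemma test {E : TopGroup} (a b c : tgsp E) :
  tmul (tinv (tmul a b)) (tmul (tmul a c) (tinv c)) = tinv b.
Proof. tnorm. done. Qed.

Lemma cont_lmul {E : TopGroup} (a : tgsp E) : continuous (fun x : tgsp E => tmul a x).
Proof.
move=> x.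
have h : (fun y : tgsp E => (a, y)) @ nbhs x --> nbhs (a, x).
  exact: (cvg_pair (cvg_cst a) cvg_id).
exact: (continuous_comp h (tmul_cont E (a, x))).
Qed.
Lemma cont_rmul {E : TopGroup} (a : tgsp E) : continuous (fun x : tgsp E => tmul x a).
Proof.
move=> x.
have h : (fun y : tgsp E => (y, a)) @ nbhs x --> nbhs (x, a).
  exact: (cvg_pair cvg_id (cvg_cst a)).
exact: (continuous_comp h (tmul_cont E (x, a))).
Qed.
Lemma cont_divl {E : TopGroup} : continuous (fun p : tgsp E * tgsp E => tmul (tinv p.1) p.2).
Proof.
move=> [x y].
have h : (fun p : tgsp E * tgsp E => (tinv p.1, p.2)) @ nbhs (x, y) --> nbhs (tinv x, y).
  apply: (cvg_pair (F := nbhs (x,y))).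
    have h1 : (fun p : tgsp E * tgsp E => p.1) @ nbhs (x,y) --> nbhs x by exact: cvg_fst.
    exact: (continuous_comp h1 (tinv_cont E x)).
  exact: cvg_snd.
exact: (continuous_comp h (tmul_cont E (tinv x, y))).
Qed.

Definition len_le {G : AbsGroup} (S : list G) (x : G) (n : nat) : Prop :=
  exists w, word_over S w /\ (length w <= n)%coq_nat /\ eval_word w = x.

Lemma eval_app {G : AbsGroup} (w1 w2 : list (bool * G)) :
  eval_word (w1 ++ w2) = gmul (eval_word w1) (eval_word w2).
Proof.
elim: w1 => [|[b s] w IH] /=; first by rewrite gmul1.
by rewrite IH gmulA.
Qed.

Lemma len_mul {G : AbsGroup} {S : list G} {x y n m} :
  len_le S x n -> len_le S y m -> len_le S (gmul x y) (n + m).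
Proof.
move=> [w1 [ow1 [l1 e1] ] ] [w2 [ow2 [l2 e2] ] ]; exists (w1 ++ w2); split.
  by move=> p hp; case: (in_app_or _ _ _ hp) => ?; [apply: ow1|apply: ow2].
by rewrite app_length eval_app e1 e2; split=> //; lia.
Qed.

Lemma len_mono {G : AbsGroup} {S : list G} {x n m} :
  (n <= m)%coq_nat -> len_le S x n -> len_le S x m.
Proof. by move=> h [w [ow [l e] ] ]; exists w; split=> //; split=> //; lia. Qed.

Lemma len_one {G : AbsGroup} (S : list G) : len_le S (gone G) 0.
Proof. by exists nil; split=> //. Qed.

Lemma len_gen {G : AbsGroup} (S : list G) s (b : bool) :
  In s S -> len_le S (if b then ginv s else s) 1.
Proof.
move=> hs; exists ((b, s) :: nil); split.
  by move=> p [<-|[] ].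
by split=> //=; rewrite gmul1r.
Qed.

Lemma eval_in {G : AbsGroup} (L : G -> Prop) (S : list G) w :
  finite_generating_set L S -> word_over S w -> L (eval_word w).
Proof. by move=> [_ h] ow; apply/h; exists w. Qed.

Lemma gen_len {G : AbsGroup} (L : G -> Prop) (S : list G) x :
  finite_generating_set L S -> L x -> exists n, len_le S x n.
Proof.
move=> [_ h] /h [w [ow e] ]; exists (length w); exists w; split=> //.
Qed.

Lemma min_nat (P : nat -> Prop) k : P k -> exists n, P n /\ forall m, P m -> (n <= m)%coq_nat.
Proof.
elim/lt_wf_ind: k => k IH Pk.
case: (classic (exists m, P m /\ (m < k)%coq_nat)) => [[m [Pm lt] ]|h].
  exact: (IH m lt Pm).
exists k; split=> // m Pm; case: (Nat.le_gt_cases k m) => // lt.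
by exfalso; apply: h; exists m.
Qed.

Lemma dist_ex {G : AbsGroup} (L : G -> Prop) (S : list G) x y :
  subgroup L -> finite_generating_set L S -> L x -> L y -> exists n, word_dist S x y n.
Proof.
move=> [_ [hm hi] ] gS Lx Ly.
have [k [w [ow [l e] ] ] ] := gen_len L S _ gS (hm _ _ (hi _ Lx) Ly).
have [n [[w' [ow' e'] ] hmin] ] := min_nat (fun n => exists w, word_over S w /\ length w = n /\
   eval_word w = gmul (ginv x) y) (length w) (ex_intro _ w (conj ow (conj erefl e))).
exists n; split; first by exists w'.
by move=> w2 ow2 e2; apply: hmin; exists w2.
Qed.

Lemma dist_le {G : AbsGroup} {S : list G} {x y n m} :
  word_dist S x y n -> len_le S (gmul (ginv x) y) m -> (n <= m)%coq_nat.
Proof. move=> [_ h] [w [ow [l e] ] ]; have := h w ow e; lia. Qed.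

Lemma dist_len {G : AbsGroup} {S : list G} {x y n} :
  word_dist S x y n -> len_le S (gmul (ginv x) y) n.
Proof. by move=> [[w [ow [l e] ] ] _]; exists w; split=> //; split=> //; lia. Qed.

Lemma lip {G : AbsGroup} (L : G -> Prop) (S : list G) (F : G -> G) (M : nat) :
  subgroup L -> finite_generating_set L S ->
  (forall h s (b : bool), L h -> In s S ->
     len_le S (gmul (ginv (F h)) (F (gmul h (if b then ginv s else s)))) M) ->
  forall w, word_over S w -> forall h, L h ->
    len_le S (gmul (ginv (F h)) (F (gmul h (eval_word w)))) (M * length w).
Proof.
move=> [_ [hm hi] ] [gS _] hF; elim=> [|[b s] w IH] ow h Lh /=.
  by rewrite gmul1r gmulV muln0; apply: len_one.
have sS : In s S by apply: (ow (b, s)); left.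
have Ls : L s := gS s sS.
have Lt : L (if b then ginv s else s) by destruct b; [apply: hi; exact: Ls|exact: Ls].
have := len_mul (hF h s b Lh sS) (IH (fun p hp => ow p (or_intror hp)) _ (hm _ _ Lh Lt)).
rewrite -gmulA gmulKr gmulA.
by apply: len_mono; lia.
Qed.

Lemma lip_dist {G : AbsGroup} (L : G -> Prop) (S : list G) (F : G -> G) (M : nat) :
  subgroup L -> finite_generating_set L S ->
  (forall h s (b : bool), L h -> In s S ->
     len_le S (gmul (ginv (F h)) (F (gmul h (if b then ginv s else s)))) M) ->
  forall h1 h2 n, L h1 -> word_dist S h1 h2 n ->
    len_le S (gmul (ginv (F h1)) (F h2)) (M * n).
Proof.
move=> sL gS hF h1 h2 n L1 [[w [ow [l e] ] ] _].
have := lip L S F M sL gS hF w ow h1 L1; rewrite e gmulKr l; exact.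
Qed.

Lemma list_bound {G : AbsGroup} (L : G -> Prop) (S : list G) (s : list G) :
  finite_generating_set L S -> exists N, forall x, In x s -> L x -> len_le S x N.
Proof.
move=> gS; elim: s => [|a s [N IH] ]; first by exists 0.
case: (classic (L a)) => [La|nLa].
  have [n hn] := gen_len L S _ gS La.
  exists (N + n) => x [<- _|xs Lx]; first by apply: len_mono hn; lia.
  by apply: len_mono (IH x xs Lx); lia.
by exists N => x [<- //|xs Lx]; apply: IH.
Qed.

Lemma rho1 {Gam : AbsGroup} {E : TopGroup} {rho : Gam -> tgsp E} :
  (forall x y, rho (gmul x y) = tmul (rho x) (rho y)) -> rho (gone Gam) = tone E.
Proof.
move=> hom; have h := hom (gone Gam) (gone Gam); rewrite gmul1 in h.
by rewrite -[rho _](tmulKl (rho (gone Gam))) -h tmulV.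
Qed.

Lemma rho_inv {Gam : AbsGroup} {E : TopGroup} {rho : Gam -> tgsp E} :
  (forall x y, rho (gmul x y) = tmul (rho x) (rho y)) -> forall x, rho (ginv x) = tinv (rho x).
Proof.
move=> hom x; symmetry; apply: (@ginv_uniq (TG E)) => /=.
by rewrite -hom gmulVr (rho1 hom).
Qed.

Definition ptE (E : TopGroup) : Type := tgsp E.
HB.instance Definition _ (E : TopGroup) := Topological.on (ptE E).
HB.instance Definition _ (E : TopGroup) := isPointed.Build (ptE E) (tone E).

Lemma compact_bound {Gam : AbsGroup} (L : Gam -> Prop) (S : list Gam) (E : TopGroup)
  (rho : Gam -> tgsp E) :
  subgroup L -> finite_generating_set L S ->
  (forall x y, rho (gmul x y) = tmul (rho x) (rho y)) ->
  virtual_uniform_lattice_embedding L rho ->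
  forall K : set (tgsp E), compact K -> exists N, forall l, L l -> K (rho l) -> len_le S l N.
Proof.
move=> sL gS hom [_ [[ker hker] [disc _] ] ] K cK.
have [L1 [Lm Li]] := sL.
have [V [oV [V1 hV] ] ] := disc (gone Gam) L1.
rewrite (rho1 hom) in V1.
have nV : nbhs (tone E) V by apply: open_nbhs_nbhs; split.
have nV' : nbhs (tmul (tinv (tone E)) (tone E)) V by rewrite tinv1 tmul1.
have := cont_divl (tone E, tone E) V nV'.
case=> [[A B] /= [nA nB] sub].
have nAB : nbhs (tone E) (A `&` B) by apply: filterI.
move: nAB; rewrite nbhsE => -[W [oW W1] sW].
pose fam (x : tgsp E) := [set y | W (tmul (tinv x) y)].
have key : forall x l0 l, L l0 -> L l -> W (tmul (tinv x) (rho l0)) -> W (tmul (tinv x) (rho l)) ->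
    In (gmul (ginv l0) l) ker.
  move=> x l0 l L0 Ll h0 h.
  have hin : (A `*` B) (tmul (tinv x) (rho l0), tmul (tinv x) (rho l)).
    by split; [exact: (sW _ h0).1|exact: (sW _ h).2].
  have := sub _ hin.
  rewrite /= tinvM tinvK -tmulA tmulKr => hv.
  apply: hker; first by apply: Lm => //; apply: Li.
  rewrite -(rho1 hom); apply: hV; first by apply: Lm => //; apply: Li.
  by rewrite hom (rho_inv hom).
have [Nk hk] := list_bound L S ker gS.
have ind : forall s : seq.seq (tgsp E), exists N, forall l, L l ->
    (exists x, x \in s /\ W (tmul (tinv x) (rho l))) -> len_le S l N.
  elim=> [|x s [N IH]]; first by exists 0 => l _ [x [] ].
  case: (classic (exists l0, L l0 /\ W (tmul (tinv x) (rho l0)))) => [[l0 [L0 W0]]|nex].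
    have [n0 h0] := gen_len L S l0 gS L0.
    exists (N + (n0 + Nk)) => l Ll [x' [] ]; rewrite seq.in_cons => /orP[/eqP ->|xs] hW.
      rewrite -(gmulKr l0 l); apply: (len_mono _ (len_mul h0 (hk _ (key x l0 l L0 Ll W0 hW) _))).
        lia.
      by apply: Lm => //; apply: Li.
    by apply: (len_mono _ (IH l Ll (ex_intro _ x' (conj xs hW)))); lia.
  exists N => l Ll [x' [] ]; rewrite seq.in_cons => /orP[/eqP ->|xs] hW.
    by exfalso; apply: nex; exists l.
  by apply: IH => //; exists x'.
have cK' : cover_compact (K : set (ptE E)) by rewrite -(compact_cover (ptE E)).
have ofam : forall x, K x -> open (fam x).
  move=> x _; have := (continuousP (fun y : tgsp E => tmul (tinv x) y)).1 (cont_lmul (tinv x)) W oW.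
  exact.
have cov : K `<=` cover K fam.
  by move=> y Ky; exists y => //; rewrite /fam /= tmulV.
have [D' _ cov'] := cK' (ptE E) K fam ofam cov.
have [N hN] := ind (finmap.enum_fset D').
exists N => l Ll Kl; apply: hN => //.
have [x Dx fx] := cov' _ Kl.
by exists x; split.
Qed.

Lemma real_ineq (M B n m : nat) : (m <= M*n)%coq_nat -> (n <= 2*B + M*m)%coq_nat ->
  Rle (Rminus (Rdiv (INR n) (INR (S M))) (INR (2*B)%coq_nat)) (INR m) /\
  Rle (INR m) (Rplus (Rmult (INR (S M)) (INR n)) (INR (2*B)%coq_nat)).
Proof.
move=> h1 h2.
have K1 : Rle 1 (INR (S M)) by rewrite S_INR; have := pos_INR M; lra.
split.
  have h3 : (n <= S M * (m + 2*B))%coq_nat.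
    rewrite mulSn mulnDr; lia.
  apply le_INR in h3; rewrite -?plusE -?multE in h3; rewrite mult_INR plus_INR in h3.
  have hK : INR (S M) <> 0%R by lra.
  have : Rle (INR n * / INR (S M)) ((INR (S M) * (INR m + INR (2*B)%coq_nat)) * / INR (S M)).
    apply: Rmult_le_compat_r => //; left; apply: Rinv_0_lt_compat; lra.
  rewrite (Rmult_comm (INR (S M))) Rmult_assoc Rinv_r // Rmult_1_r.
  rewrite /Rdiv; lra.
have h3 : (m <= S M * n + 2*B)%coq_nat.
  rewrite mulSn; lia.
apply le_INR in h3; rewrite -?plusE -?multE in h3; rewrite plus_INR mult_INR in h3; lra.
Qed.

Definition setmul {E : TopGroup} (A B : set (tgsp E)) : set (tgsp E) :=
  (fun p : tgsp E * tgsp E => tmul p.1 p.2) @` (A `*` B).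
Definition setinv {E : TopGroup} (A : set (tgsp E)) : set (tgsp E) := tinv @` A.

Lemma compact_setmul {E : TopGroup} {A B : set (tgsp E)} :
  compact A -> compact B -> compact (setmul A B).
Proof.
move=> cA cB; apply: continuous_compact; last exact: compact_setX.
apply: continuous_subspaceT; exact: tmul_cont.
Qed.
Lemma compact_setinv {E : TopGroup} {A : set (tgsp E)} :
  compact A -> compact (setinv A).
Proof.
move=> cA; apply: continuous_compact => //.
apply: continuous_subspaceT; exact: tinv_cont.
Qed.
Lemma mem_setmul {E : TopGroup} {A B : set (tgsp E)} {a b} :
  A a -> B b -> setmul A B (tmul a b).
Proof. by move=> Aa Bb; exists (a, b). Qed.
Lemma mem_setinv {E : TopGroup} {A : set (tgsp E)} {a} :
  A a -> setinv A (tinv a).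
Proof. by move=> Aa; exists a. Qed.

Ltac enorm hom rhod := repeat progress (rewrite ?hom ?(rho_inv hom) ?rhod; tnorm).

Theorem lemma3p8 (Gam : AbsGroup) (Lam : Gam -> Prop) (Eg : TopGroup)
  (phi : Gam -> tgsp Eg) :
  hecke_pair Lam -> finitely_generated Lam ->
  locally_compact_group Eg ->
  (forall x y : Gam, phi (gmul x y) = tmul (phi x) (phi y)) ->
  virtual_uniform_lattice_embedding Lam phi ->
  engulfing_group Lam Eg /\ uniformly_commensurated Lam.
Proof.
move=> hk _ _ hom vule.
have sL : subgroup Lam := hk.1.
have [L1 [Lm Li] ] := sL.
split.
  exists phi, (fun g => conj_E (phi g)).
  split; first exact: vule.
  split.
    move=> g; split.
      by move=> x y; rewrite /conj_E; tnorm.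
    split.
      move=> x; exact: (continuous_comp (cont_rmul (tinv (phi g)) x) (cont_lmul (phi g) _)).
    exists (conj_E (tinv (phi g))); split.
      move=> x; exact: (continuous_comp (cont_rmul (tinv (tinv (phi g))) x) (cont_lmul (tinv (phi g)) _)).
    by split => x; rewrite /conj_E; tnorm.
  split.
    by move=> g1 g2 x; rewrite /conj_E hom; tnorm.
  split; first by [].
  move=> g; exists Lam; split.
    split=> //; split=> //; exists (gone Gam :: nil) => k Lk; exists (gone Gam); split; first by left.
    by split=> //; rewrite ginv1 gmul1.
  by move=> h _; rewrite /conj_E /Defs.conjg !hom (rho_inv hom); tnorm.
move=> S gS.
have [_ [_ [_ [C [cC hC] ] ] ] ] := vule.
pose P := setinv C.
have cP : compact P := compact_setinv cC.
have dec : forall e, exists p : Gam * tgsp Eg, Lam p.1 /\ P p.2 /\ e = tmul (phi p.1) p.2.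
  move=> e; have [c [h [Cc [Lh he] ] ] ] := hC (tinv e).
  exists (ginv h, tinv c); split; first by apply: Li.
  split; first by apply: mem_setinv.
  by rewrite /= (rho_inv hom) -tinvM -he tinvK.
have [d hd] : exists d : tgsp Eg -> Gam * tgsp Eg, forall e,
    Lam (d e).1 /\ P (d e).2 /\ e = tmul (phi (d e).1) (d e).2.
  by exists (fun e => proj1_sig (cid (dec e))) => e; exact: (proj2_sig (cid (dec e))).
have rhod : forall e, phi (d e).1 = tmul e (tinv (d e).2).
  by move=> e; have [_ [_ he] ] := hd e; rewrite [X in _ = tmul X _]he -tmulA tmulVr tmul1r.
have Pd : forall e, P (d e).2 by move=> e; exact: (hd e).2.1.
have cb := compact_bound Lam S Eg phi sL gS hom vule.
pose K1 s (b : bool) := setmul (setmul P [set phi (if b then ginv s else s)]) (setinv P).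
have cK1 : forall s b, compact (K1 s b).
  by move=> s b; apply: compact_setmul; [apply: compact_setmul => //; apply: compact_set1|apply: compact_setinv].
have [M hM] : exists M, forall s (b : bool) l, In s S -> Lam l -> K1 s b (phi l) -> len_le S l M.
  have : forall S0 : list Gam, exists M, forall s (b : bool) l, In s S0 -> Lam l -> K1 s b (phi l) -> len_le S l M.
    elim=> [|s0 S0 [M0 IH] ]; first by exists 0.
    have [N1 h1] := cb (K1 s0 true) (cK1 _ _).
    have [N2 h2] := cb (K1 s0 false) (cK1 _ _).
    exists (M0 + (N1 + N2)) => s b l [<-|sS] Ll hK.
      case: b hK => hK; [apply: (len_mono _ (h1 l Ll hK))|apply: (len_mono _ (h2 l Ll hK))]; lia.
    by apply: (len_mono _ (IH s b l sS Ll hK)); lia.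
  exact.
have [B2 hB2] := cb (setmul P P) (compact_setmul cP cP).
have [B3 hB3] := cb (setmul (setinv P) (setinv P)) (compact_setmul (compact_setinv cP) (compact_setinv cP)).
exists (INR M.+1), (INR (2 * (B2 + B3))%coq_nat) => g.
pose f := fun h => gmul (d (phi g)).1 (d (tmul (d (phi g)).2 (phi h))).1.
pose kf := fun h => (d (tmul (d (phi g)).2 (phi h))).2.
pose q := fun y => (d (tmul (tinv (d (phi g)).2) (phi (gmul (ginv (d (phi g)).1) y)))).1.
pose kq := fun y => (d (tmul (tinv (d (phi g)).2) (phi (gmul (ginv (d (phi g)).1) y)))).2.
have Lf : forall h, Lam (f h) by move=> h; apply: Lm; exact: (hd _).1.
have Lq : forall y, Lam (q y) by move=> y; exact: (hd _).1.
have I3 : forall h1 h2, phi (gmul (ginv (f h1)) (f h2)) =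
    tmul (tmul (kf h1) (phi (gmul (ginv h1) h2))) (tinv (kf h2)).
  by move=> h1 h2; rewrite /f /kf; enorm hom rhod.
have I5 : forall y1 y2, phi (gmul (ginv (q y1)) (q y2)) =
    tmul (tmul (kq y1) (phi (gmul (ginv y1) y2))) (tinv (kq y2)).
  by move=> y1 y2; rewrite /q /kq; enorm hom rhod.
have I4 : forall y, phi (gmul (ginv (f (q y))) y) = tmul (kf (q y)) (kq y).
  by move=> y; rewrite /f /kf /q /kq; enorm hom rhod.
have I6a : forall h, phi (gmul (ginv h) (q (f h))) = tmul (tinv (kf h)) (tinv (kq (f h))).
  by move=> h; rewrite /f /kf /q /kq; enorm hom rhod.
have I6b : forall h, phi (gmul (ginv (q (f h))) h) = tmul (kq (f h)) (kf h).
  by move=> h; rewrite /f /kf /q /kq; enorm hom rhod.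
have I2 : forall h, phi (gmul (ginv (f h)) (Defs.conjg g h)) = tmul (kf h) (tinv (phi g)).
  by move=> h; rewrite /f /kf /Defs.conjg; enorm hom rhod.
have hF : forall h s (b : bool), Lam h -> In s S ->
    len_le S (gmul (ginv (f h)) (f (gmul h (if b then ginv s else s)))) M.
  move=> h s b Lh sS; apply: (hM s b) => //; first exact: (Lm _ _ (Li _ (Lf _)) (Lf _)).
  rewrite I3 gmulKl; apply: mem_setmul; last by apply: mem_setinv; apply: Pd.
  by apply: mem_setmul => //; apply: Pd.
have hQ : forall y s (b : bool), Lam y -> In s S ->
    len_le S (gmul (ginv (q y)) (q (gmul y (if b then ginv s else s)))) M.
  move=> y s b Ly sS; apply: (hM s b) => //; first exact: (Lm _ _ (Li _ (Lq _)) (Lq _)).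
  rewrite I5 gmulKl; apply: mem_setmul; last by apply: mem_setinv; apply: Pd.
  by apply: mem_setmul => //; apply: Pd.
exists f; split.
  split; first by rewrite S_INR; have := pos_INR M; lra.
  split; first by move=> x _; apply: Lf.
  split.
    move=> x y n m Lx Ly dn dm.
    apply: real_ineq.
      exact: (dist_le dm (lip_dist Lam S f M sL gS hF x y n Lx dn)).
    have A1 : len_le S (gmul (ginv x) (q (f x))) B3.
      apply: hB3; first exact: (Lm _ _ (Li _ Lx) (Lq _)).
      by rewrite I6a; apply: mem_setmul; apply: mem_setinv; apply: Pd.
    have A2 := lip_dist Lam S q M sL gS hQ (f x) (f y) m (Lf x) dm.
    have A3 : len_le S (gmul (ginv (q (f y))) y) B2.
      apply: hB2; first exact: (Lm _ _ (Li _ (Lq _)) Ly).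
      by rewrite I6b; apply: mem_setmul; apply: Pd.
    have e : gmul (ginv x) y = gmul (gmul (gmul (ginv x) (q (f x)))
        (gmul (ginv (q (f x))) (q (f y)))) (gmul (ginv (q (f y))) y).
      by gnorm.
    have := dist_le dn; rewrite e => /(_ _ (len_mul (len_mul A1 A2) A3)); lia.
  move=> y Ly; exists (q y).
  have [n dn] := dist_ex Lam S (f (q y)) y sL gS (Lf _) Ly.
  exists n; split; first exact: Lq.
  split; first exact: dn.
  apply: le_INR.
  have : len_le S (gmul (ginv (f (q y))) y) B2.
    apply: hB2; first exact: (Lm _ _ (Li _ (Lf _)) Ly).
    by rewrite I4; apply: mem_setmul; apply: Pd.
  move=> /(dist_le dn); lia.
have cN : compact (setmul P [set tinv (phi g)]) by apply: compact_setmul => //; apply: compact_set1.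
have [Na hNa] := cb _ cN.
exists Na => h Lh hc.
have Lc : Lam (Defs.conjg g h) by move: hc; rewrite /conj_set ginvK.
have [n dn] := dist_ex Lam S (f h) (Defs.conjg g h) sL gS (Lf h) Lc.
exists n; split => //.
apply: (dist_le dn); apply: hNa; first exact: (Lm _ _ (Li _ (Lf _)) Lc).
by rewrite I2; apply: mem_setmul => //; apply: Pd.
Qed.
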